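(* Let $U$ be a single-qubit unitary and let $U'$ be a qutrit unitary emulating $U$. Suppose we are given the two-qutrit $\ket{2}$-controlled $U'$ gate. Then there is a three-qutrit circuit consisting of this given gate together with qutrit Clifford gates that emulates the three-qubit doubly-controlled gate $\mathrm{CC}U$ (which applies $U$ to the third qubit iff the first two qubits are both $\ket{1}$); in particular its non-Clifford cost equals that of the given $\ket{2}$-controlled $U'$ gate.
   Context: A qutrit is $\mathbb{C}^3$ with basis $\ket{0},\ket{1},\ket{2}$; $\omega=e^{2\pi i/3}$. Qutrit Clifford gates are those generated (up to global phase) by $S=\mathrm{diag}(1,1,\omega)$, $H=\frac{1}{\sqrt3}\begin{pmatrix}1&1&1\\1&\omega&\bar\omega\\1&\bar\omega&\omega\end{pmatrix}$ and $\mathrm{CX}:\ket{i,j}\mapsto\ket{i,(i+j)\bmod3}$. A qutrit unitary emulates a qubit unitary $U$ if, identifying qubit basis states $\ket{x}$, $x\in\{0,1\}^n$, with the equally labelled qutrit basis states, it maps each $\ket{x}$ to $U\ket{x}$. For a qutrit unitary $V$, the $\ket{2}$-controlled $V$ is the unitary acting as $\ket{0}\otimes\ket{\psi}\mapsto\ket{0}\otimes\ket{\psi}$, $\ket{1}\otimes\ket{\psi}\mapsto\ket{1}\otimes\ket{\psi}$, $\ket{2}\otimes\ket{\psi}\mapsto\ket{2}\otimes V\ket{\psi}$. The non-Clifford cost of a circuit is its number of non-Clifford gates. *)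

(* Defs.v *)
From HB Require Import structures.
From mathcomp Require Import all_boot all_order all_algebra.
Set Implicit Arguments. Unset Strict Implicit. Unset Printing Implicit Defensive.
Import Order.TTheory GRing.Theory Num.Theory.
Local Open Scope ring_scope.

Section Qutrit.
Variable C : numClosedFieldType.

Definition adjmx n (M : 'M[C]_n) : 'M[C]_n := (map_mx (fun z => Num.conj z) M)^T.
Definition unitary n (M : 'M[C]_n) : Prop := M *m adjmx M = 1%:M.

(* omega = e^{2 pi i/3} = (-1 + i sqrt 3)/2 *)
Definition omega : C := (-1 + Num.imaginary * sqrtC 3) / 2.

Definition S_gate : 'M[C]_3 :=
  \matrix_(i, j) if i == j then (if (i : nat) == 2%N then omega else 1) else 0.
Definition H_gate : 'M[C]_3 :=
  \matrix_(i, j) (omega ^+ ((i : nat) * (j : nat))%N / sqrtC 3).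

(* two-qutrit gates on C^3 (x) C^3, basis index 3*a + b for |a,b> *)
Definition CX_gate : 'M[C]_9 :=
  \matrix_(i, j)
    if (((i : nat) %/ 3 == (j : nat) %/ 3)
       && ((i : nat) %% 3 == ((j : nat) %/ 3 + (j : nat) %% 3) %% 3))%N
    then 1 else 0.
(* |2>-controlled V: control first qutrit, target second *)
Definition ctrl2 (V : 'M[C]_3) : 'M[C]_9 :=
  \matrix_(i, j)
    if ((i : nat) %/ 3 == (j : nat) %/ 3)%N then
      (if ((i : nat) %/ 3 == 2)%N then V (inord ((i : nat) %% 3)%N) (inord ((j : nat) %% 3)%N)
       else if ((i : nat) %% 3 == (j : nat) %% 3)%N then 1 else 0)
    else 0.

(* three-qutrit register: basis index 9*a0 + 3*a1 + a2 for |a0,a1,a2>;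
   wire k : 'I_3 has digit weight 3^(2-k) *)
Definition qdigit (k : 'I_3) (i : 'I_27) : nat := (((i : nat) %/ 3 ^ (2 - k)) %% 3)%N.

Definition embed1 (k : 'I_3) (G : 'M[C]_3) : 'M[C]_27 :=
  \matrix_(i, j)
    if [forall m : 'I_3, (m != k) ==> (qdigit m i == qdigit m j)]
    then G (inord (qdigit k i)) (inord (qdigit k j)) else 0.

Definition embed2 (k l : 'I_3) (G : 'M[C]_9) : 'M[C]_27 :=
  \matrix_(i, j)
    if [forall m : 'I_3, ((m != k) && (m != l)) ==> (qdigit m i == qdigit m j)]
    then G (inord (3 * qdigit k i + qdigit l i)%N) (inord (3 * qdigit k j + qdigit l j)%N)
    else 0.

Inductive gate :=
  | GS of 'I_3
  | GH of 'I_3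
  | GCX of 'I_3 & 'I_3    (* CX, control wire, target wire *)
  | GPhase of C           (* global phase (Cliffords are taken up to phase) *)
  | GCV of 'I_3 & 'I_3.   (* the given |2>-controlled U' gate: control, target *)

Definition gate_wf (g : gate) : bool :=
  match g with
  | GCX k l | GCV k l => k != l
  | GPhase c => `|c| == 1
  | _ => true
  end.

Definition is_given (g : gate) : bool := if g is GCV _ _ then true else false.

Definition gate_mx (U' : 'M[C]_3) (g : gate) : 'M[C]_27 :=
  match g with
  | GS k => embed1 k S_gate
  | GH k => embed1 k H_gate
  | GCX k l => embed2 k l CX_gate
  | GPhase c => c%:M
  | GCV k l => embed2 k l (ctrl2 U')
  end.

(* gates applied in list order: the first gate acts first *)
Definition circuit_mx (U' : 'M[C]_3) (c : seq gate) : 'M[C]_27 :=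
  foldl (fun M g => gate_mx U' g *m M) 1%:M c.

(* qubit basis index x < 2^n (bit k has weight 2^k) is identified with the
   qutrit basis index having the same digits in base 3 *)
Definition b2t (n x : nat) : nat := (\sum_(k < n) ((x %/ 2 ^ k) %% 2) * 3 ^ k)%N.
Definition qembed n : 'M[C]_(3 ^ n, 2 ^ n)%N :=
  \matrix_(i, j) if ((i : nat) == b2t n j)%N then 1 else 0.
Definition emulates n (V : 'M[C]_(3 ^ n)%N) (W : 'M[C]_(2 ^ n)%N) : Prop :=
  V *m qembed n = qembed n *m W.

(* doubly-controlled U on three qubits; basis index 4*x0 + 2*x1 + x2;
   indices 6,7 are |1,1,0>, |1,1,1> *)
Definition CCU (U : 'M[C]_2) : 'M[C]_(2 ^ 3)%N :=
  \matrix_(i, j)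
    if (6 <= (i : nat))%N && (6 <= (j : nat))%N
    then U (inord ((i : nat) - 6)%N) (inord ((j : nat) - 6)%N)
    else if i == j then 1 else 0.

End Qutrit.

(* Main.v *)
Require Import Defs.
From mathcomp Require Import all_boot all_order all_algebra.
From mathcomp Require Import zify.
Import GRing.Theory Num.Theory.
Local Open Scope ring_scope.

Section Proof.
Variable C : numClosedFieldType.

Lemma mul_sel_r m n p (M : 'M[C]_(m,n)) (B : 'M[C]_(n,p)) i j (k0 : 'I_n) :
  (forall k, B k j = if k == k0 then 1 else 0) -> (M *m B) i j = M i k0.
Proof.
move=> HB; rewrite mxE (bigD1 k0) //= HB eqxx mulr1 big1 ?addr0 // => k /negbTE nk.
by rewrite HB nk mulr0.
Qed.

Lemma mul_sel_l m n p (A : 'M[C]_(m,n)) (N : 'M[C]_(n,p)) i j (k0 : 'I_n) :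
  (forall k, A i k = if k == k0 then 1 else 0) -> (A *m N) i j = N k0 j.
Proof.
move=> HA; rewrite mxE (bigD1 k0) //= HA eqxx mul1r big1 ?addr0 // => k /negbTE nk.
by rewrite HA nk mul0r.
Qed.

Definition w0 : 'I_3 := @Ordinal 3 0 erefl.
Definition w1 : 'I_3 := @Ordinal 3 1 erefl.
Definition w2 : 'I_3 := @Ordinal 3 2 erefl.

Definition dg0 (n : nat) := (n %/ 9 %% 3)%N.
Definition dg1 (n : nat) := (n %/ 3 %% 3)%N.
Definition dg2 (n : nat) := (n %/ 1 %% 3)%N.

Lemma fa01 (P : 'I_3 -> bool) :
  [forall m : 'I_3, ((m != w0) && (m != w1)) ==> P m] = P w2.
Proof.
apply/forallP/idP => [/(_ w2) // | H m].
case: m => [[|[|[|m]]] Hm] //=.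
by have -> : Ordinal Hm = w2 by apply: val_inj.
Qed.

Lemma fa12 (P : 'I_3 -> bool) :
  [forall m : 'I_3, ((m != w1) && (m != w2)) ==> P m] = P w0.
Proof.
apply/forallP/idP => [/(_ w0) // | H m].
case: m => [[|[|[|m]]] Hm] //=.
by have -> : Ordinal Hm = w0 by apply: val_inj.
Qed.

Lemma dg_lt n : (3 * dg0 n + dg1 n < 9)%N /\ (3 * dg1 n + dg2 n < 9)%N.
Proof.
rewrite /dg0 /dg1 /dg2.
have h1 := ltn_pmod (n %/ 9) (isT : 0 < 3)%N.
have h2 := ltn_pmod (n %/ 3) (isT : 0 < 3)%N.
have h3 := ltn_pmod (n %/ 1) (isT : 0 < 3)%N.
split; lia.
Qed.

Definition cxb (i k : nat) :=
  (dg2 i == dg2 k) &&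
  (((3 * dg0 i + dg1 i) %/ 3 == (3 * dg0 k + dg1 k) %/ 3) &&
   ((3 * dg0 i + dg1 i) %% 3 == ((3 * dg0 k + dg1 k) %/ 3 + (3 * dg0 k + dg1 k) %% 3) %% 3))%N.

Lemma P_E (i k : 'I_27) : embed2 w0 w1 (CX_gate C) i k = if cxb i k then 1 else 0.
Proof.
rewrite mxE fa01 mxE !inordK; try by case: (dg_lt i); case: (dg_lt k).
rewrite (_ : forall i, qdigit w0 i = dg0 i) // (_ : forall i, qdigit w1 i = dg1 i) //.
rewrite (_ : forall i, qdigit w2 i = dg2 i) // /cxb.
by case: (dg2 i == dg2 k).
Qed.


Variables (U : 'M[C]_2) (U' : 'M[C]_3).

Lemma V_E (x y : 'I_27) : embed2 w1 w2 (ctrl2 U') x y =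
  if dg0 x == dg0 y then
    (let a := (3 * dg1 x + dg2 x)%N in let c := (3 * dg1 y + dg2 y)%N in
     if (a %/ 3 == c %/ 3)%N then
       (if (a %/ 3 == 2)%N then U' (inord (a %% 3)) (inord (c %% 3))
        else if (a %% 3 == c %% 3)%N then 1 else 0)
     else 0)
  else 0.
Proof.
rewrite mxE fa12 mxE !inordK; try by case: (dg_lt x); case: (dg_lt y).
Qed.

Definition bl := [:: 0; 1; 3; 4; 9; 10; 12; 13]%N.
Definition bn (j : nat) := nth 0%N bl j.

Lemma b2t3 (j : 'I_8) : b2t 3 j = bn j.
Proof.
rewrite /b2t !big_ord_recr big_ord0 /=.
by case: j => [[|[|[|[|[|[|[|[|j]]]]]]]] Hj].
Qed.

Lemma b2t1 (x : nat) : (x < 2)%N -> b2t 1 x = x.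
Proof.
rewrite /b2t big_ord1 /= expn0 muln1 divn1; exact: modn_small.
Qed.

Lemma Q3 (M : 'M[C]_27) i (j : 'I_8) : (bn j < 27)%N ->
  (M *m qembed C 3) i j = M i (inord (bn j)).
Proof.
move=> hb; apply: mul_sel_r => k.
by rewrite mxE b2t3 -(inj_eq val_inj) /= inordK.
Qed.

Lemma Uemu : emulates (n:=1) U' U -> forall r s, (r < 3)%N -> (s < 2)%N ->
  U' (inord r) (inord s) = if (r < 2)%N then U (inord r) (inord s) else 0.
Proof.
move=> H r s hr hs.
rewrite /emulates in H.
have := congr1 (fun M : 'M[C]_(3^1,2^1) => M (inord r : 'I_3) (inord s : 'I_2)) H => /=.
rewrite (@mul_sel_r _ _ _ _ _ _ _ (inord s)); last first.
  move=> k; rewrite mxE (_ : @nat_of_ord (2^1) (@inord 1 s) = s); last exact: inordK. by rewrite b2t1 // -[k == inord s](inj_eq val_inj) /= inordK //; apply: ltn_trans hs _.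
move=> ->; case: ifP => hr2.
  rewrite (@mul_sel_l _ _ _ _ _ _ _ (inord r)) //.
  move=> k; rewrite mxE b2t1 // -[k == _](inj_eq val_inj) /= !inordK //.
  by rewrite eq_sym.
rewrite mxE big1 // => k _; rewrite mxE b2t1 // inordK //.
case: eqP => [E|]; last by rewrite mul0r.
by move: (ltn_ord k); rewrite -E hr2.
Qed.

Definition fp (k : nat) := (9 * dg0 k + 3 * ((dg0 k + dg1 k) %% 3) + dg2 k)%N.
Definition gp (i : nat) := (9 * dg0 i + 3 * ((dg1 i + 2 * dg0 i) %% 3) + dg2 i)%N.

Definition isimg (i : nat) := i \in bl.
Definition binv (i : nat) := index i bl.

Definition atom := (nat * nat * nat)%type.
Definition interp (t : atom) : C :=
  match t.1.1 with
  | 0 => 0 | 1 => 1 | 2 => U (inord t.1.2) (inord t.2)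
  | _ => U' (inord t.1.2) (inord t.2) end.
Definition uatom (r s : nat) : atom :=
  if (s < 2)%N then (if (r < 2)%N then (2, r, s)%N else (0, 0, 0)%N) else (3, r, s)%N.

Definition lhs_atom (i j : nat) : atom :=
  let x := gp (gp i) in let y := fp (bn j) in
  let a := (3 * dg1 x + dg2 x)%N in let c := (3 * dg1 y + dg2 y)%N in
  if dg0 x == dg0 y then
    if (a %/ 3 == c %/ 3)%N then
      (if (a %/ 3 == 2)%N then uatom (a %% 3) (c %% 3)
       else if (a %% 3 == c %% 3)%N then (1, 0, 0)%N else (0, 0, 0)%N)
    else (0, 0, 0)%N
  else (0, 0, 0)%N.

Definition rhs_atom (i j : nat) : atom :=
  if isimg i then
    (if (6 <= binv i)%N && (6 <= j)%N then (2, binv i - 6, j - 6)%N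
     else if binv i == j then (1, 0, 0)%N else (0, 0, 0)%N)
  else (0, 0, 0)%N.


Definition f1 := all (fun i => all (fun k => (cxb i k == (i == fp k)) && (cxb i k == (k == gp i))) (iota 0 27)) (iota 0 27).
Definition f2 := all (fun i => (fp i < 27) && (gp i < 27))%N (iota 0 27).
Definition f3 := all (fun j => bn j < 27)%N (iota 0 8).
Definition f4 := all (fun i => all (fun k => (i == bn k) == isimg i && (k == binv i)) (iota 0 8)) (iota 0 27).
Definition f5 := all (fun i => isimg i ==> (binv i < 8))%N (iota 0 27).
Definition f6 := all (fun i => all (fun j => lhs_atom i j == rhs_atom i j) (iota 0 8)) (iota 0 27).
Lemma f1T : f1. Proof. by vm_compute. Qed.
Lemma f2T : f2. Proof. by vm_compute. Qed.
Lemma f3T : f3. Proof. by vm_compute. Qed.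
Lemma f4T : f4. Proof. by vm_compute. Qed.
Lemma f5T : f5. Proof. by vm_compute. Qed.
Lemma f6T : f6. Proof. by vm_compute. Qed.

Lemma allI {P : pred nat} {n} : all P (iota 0 n) -> forall i, (i < n)%N -> P i.
Proof. by move/allP => H i hi; apply: H; rewrite mem_iota. Qed.
Arguments allI {P n} _ {i}.

Lemma fp_lt i : (i < 27)%N -> (fp i < 27)%N.
Proof. by move/(allI f2T)/andP=> []. Qed.
Lemma gp_lt i : (i < 27)%N -> (gp i < 27)%N.
Proof. by move/(allI f2T)/andP=> []. Qed.
Lemma bn_lt (j : 'I_8) : (bn j < 27)%N.
Proof. exact: (allI f3T). Qed.

Lemma Pl (i k : 'I_27) : embed2 w0 w1 (CX_gate C) i k = if k == inord (gp i) then 1 else 0.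
Proof.
rewrite P_E; have /andP[_ /eqP ->] := allI (allI f1T (ltn_ord i)) (ltn_ord k).
by rewrite -[k == _](inj_eq val_inj) /= inordK // gp_lt.
Qed.

Lemma Pr (k x : 'I_27) : embed2 w0 w1 (CX_gate C) k x = if k == inord (fp x) then 1 else 0.
Proof.
rewrite P_E; have /andP[/eqP -> _] := allI (allI f1T (ltn_ord k)) (ltn_ord x).
by rewrite -[k == inord _](inj_eq val_inj) /= inordK // fp_lt.
Qed.

Lemma uatomE r s : (r < 3)%N -> emulates (n:=1) U' U ->
  interp (uatom r s) = U' (inord r) (inord s).
Proof.
move=> hr H; rewrite /uatom; case: ifP => hs.
  by rewrite (Uemu H _ _ hr hs); case: ifP.
by [].
Qed.

Lemma lhsE (i j : nat) : emulates (n:=1) U' U -> (gp (gp i) < 27)%N -> (fp (bn j) < 27)%N ->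
  embed2 w1 w2 (ctrl2 U') (inord (gp (gp i))) (inord (fp (bn j))) = interp (lhs_atom i j).
Proof.
move=> H h1 h2; rewrite V_E !inordK // /lhs_atom.
case: ifP => _; last by [].
case: ifP => _; last by [].
case: ifP => _; first by rewrite uatomE // ltn_pmod.
by case: ifP => _.
Qed.

Lemma rhsE (i : 'I_27) (j : 'I_8) : (qembed C 3 *m CCU U) i j = interp (rhs_atom i j).
Proof.
rewrite /rhs_atom; case: ifP => hi.
  have hb : (binv i < 8)%N by have := allI f5T (ltn_ord i); rewrite hi.
  rewrite (@mul_sel_l _ _ _ _ _ _ _ (inord (binv i))); last first.
    move=> k; rewrite mxE b2t3.
    have /eqP -> := allI (allI f4T (ltn_ord i)) (ltn_ord k).
    by rewrite hi -[k == inord _](inj_eq val_inj) /= inordK.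
  rewrite mxE inordK //; case: ifP => // _.
  by rewrite -[inord _ == j](inj_eq val_inj) /= inordK //; case: ifP.
rewrite mxE big1 // => k _; rewrite mxE b2t3.
have /eqP -> := allI (allI f4T (ltn_ord i)) (ltn_ord k).
by rewrite hi mul0r.
Qed.

End Proof.

Theorem mainTheorem3 (C : numClosedFieldType) (U : 'M[C]_2) (U' : 'M[C]_3) :
  unitary U -> unitary U' -> emulates (n := 1) U' U ->
  exists c : seq (gate C),
    all (@gate_wf C) c /\ count (@is_given C) c = 1%N /\
    emulates (n := 3) (circuit_mx U' c) (CCU U).
Proof.
move=> _ _ H.
exists [:: GCX C w0 w1; GCV C w1 w2; GCX C w0 w1; GCX C w0 w1].
split; first by []. split; first by [].
rewrite /emulates /circuit_mx /= mulmx1 -!mulmxA.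
apply/matrixP => i j.
rewrite (rhsE _ _ U').
rewrite (@mul_sel_l C (3^3)%N (3^3)%N (2^3)%N _ _ i j (@inord 26 (gp i))); last exact: Pl.
rewrite (@mul_sel_l C (3^3)%N (3^3)%N (2^3)%N _ _ _ j (@inord 26 (gp (@inord 26 (gp i))))); last exact: Pl.
rewrite (@mul_sel_r C (3^3)%N (3^3)%N (2^3)%N _ _ _ j (@inord 26 (fp (@inord 26 (bn j))))); last first.
  by move=> k; rewrite Q3 ?bn_lt // Pr.
rewrite !inordK ?bn_lt ?gp_lt //.
rewrite (lhsE _ _ _ _ _ H) ?fp_lt ?gp_lt ?bn_lt //.
by have /eqP -> := allI (allI f6T _ (ltn_ord i)) _ (ltn_ord j).
Qed.
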